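(* Let $N\ge 2$ and let $\theta_1,\dots,\theta_N\in\mathbb R$. Consider the $N$-qubit state $|e_{\theta_1}\rangle\otimes\cdots\otimes|e_{\theta_N}\rangle$, where $|e_\theta\rangle=(|0\rangle+e^{i\theta}|1\rangle)/\sqrt2$. Apply, for each $j=2,\dots,N$, a CNOT gate with qubit $1$ as control and qubit $j$ as target, and then measure each qubit $j=2,\dots,N$ in the computational basis, obtaining outcomes $m_j\in\{0,1\}$. Then the outcomes $m_2,\dots,m_N$ are independent and uniformly distributed, and conditional on them the first qubit is left (up to a global phase) in the state $|e_{\theta_{\rm tot}}\rangle$ with $\theta_{\rm tot}=\theta_1+\sum_{j=2}^N(-1)^{m_j}\theta_j$. In particular, if $\theta_1=\cdots=\theta_N=\theta$ and exactly $k$ of the outcomes equal $0$, the first qubit is left in $|e_{(2k+2-N)\theta}\rangle$, which occurs with probability $2^{-(N-1)}\binom{N-1}{k}$, and the average quantum Fisher information about $\theta$ of the resulting single-qubit state, $\sum_{k=0}^{N-1}2^{-(N-1)}\binom{N-1}{k}(2k+2-N)^2$, equals $N$, the quantum Fisher information of $|e_\theta\rangle^{\otimes N}$.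
   Context: The CNOT gate acts as $|a\rangle|b\rangle\mapsto|a\rangle|a\oplus b\rangle$ for $a,b\in\{0,1\}$. For a differentiable family of pure states $|\phi_\theta\rangle$, the quantum Fisher information is $F(|\phi_\theta\rangle)=4\left(\langle\partial_\theta\phi_\theta|\partial_\theta\phi_\theta\rangle-|\langle\phi_\theta|\partial_\theta\phi_\theta\rangle|^2\right)$; for $|e_{c\theta}\rangle$ it equals $c^2$. *)

(* Defs.v *)
From HB Require Import structures.
From mathcomp Require Import all_boot all_order all_algebra.
From mathcomp Require Import complex.
From mathcomp Require Import all_classical all_reals all_analysis.

Set Implicit Arguments.
Unset Strict Implicit.
Unset Printing Implicit Defensive.
Import Order.TTheory GRing.Theory Num.Theory.
Local Open Scope ring_scope.

Section Qubits.
Variable R : realType.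
Local Notation C := R[i].

Definition sqmod (z : C) : R := complex.Re z ^+ 2 + complex.Im z ^+ 2.

Definition expi (t : R) : C := Complex (cos t) (sin t).

Definition e_ket (t : R) : bool -> C :=
  fun b => (if b then expi t else 1) / Complex (Num.sqrt 2) 0.

(* An (n+1)-qubit register: qubit 1 of the paper is ord0, qubit j+2 of the
   paper (j < n) is lift ord0 j.  Computational basis = {ffun 'I_n.+1 -> bool}. *)
Definition basis n := {ffun 'I_n.+1 -> bool}.

Definition prod_state n (th : 'I_n.+1 -> R) : basis n -> C :=
  fun x => \prod_(j < n.+1) e_ket (th j) (x j).

(* action of a gate permuting basis states: U |x> = |f x> *)
Definition apply_basis_gate n (f : basis n -> basis n) (psi : basis n -> C)
  : basis n -> C :=
  fun y => \sum_(x : basis n | f x == y) psi x.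

Definition cnot n (c t : 'I_n.+1) (x : basis n) : basis n :=
  [ffun j => if j == t then x c (+) x t else x j].

Definition after_cnots n (psi : basis n -> C) : basis n -> C :=
  foldl (fun phi (j : 'I_n) => apply_basis_gate (cnot ord0 (lift ord0 j)) phi)
        psi (enum 'I_n).

Definition join n (a : bool) (m : {ffun 'I_n -> bool}) : basis n :=
  [ffun j => if unlift ord0 j is Some i then m i else a].

Definition prob n (psi : basis n -> C) (m : {ffun 'I_n -> bool}) : R :=
  \sum_(a : bool) sqmod (psi (join a m)).

Definition post n (psi : basis n -> C) (m : {ffun 'I_n -> bool}) : bool -> C :=
  fun a => psi (join a m) / Complex (Num.sqrt (prob psi m)) 0.

Definition theta_tot n (th : 'I_n.+1 -> R) (m : {ffun 'I_n -> bool}) : R :=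
  th ord0 + \sum_(i < n) (-1) ^+ (m i) * th (lift ord0 i).

Definition nzeros n (m : {ffun 'I_n -> bool}) : nat := #|[set i | ~~ m i]|.

Definition eq_up_to_phase (u v : bool -> C) : Prop :=
  exists c : C, sqmod c = 1 /\ forall a, u a = c * v a.

Definition dstate (I : finType) (phi : R -> I -> C) (t : R) : I -> C :=
  fun i => Complex (derive1 (fun s => complex.Re (phi s i)) t)
                   (derive1 (fun s => complex.Im (phi s i)) t).

Definition QFI (I : finType) (phi : R -> I -> C) (t : R) : R :=
  4 * (\sum_i sqmod (dstate phi t i)
       - sqmod (\sum_i conjc (phi t i) * dstate phi t i)).

End Qubits.

(* Main.v *)
Require Import Defs.
From HB Require Import structures.
From mathcomp Require Import all_boot all_order all_algebra.
From mathcomp Require Import complex.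
From mathcomp Require Import all_classical all_reals all_analysis.
From mathcomp Require Import ring lra.
Import Order.TTheory GRing.Theory Num.Theory.
Local Open Scope ring_scope.

Section Lib.
Variable R : realType.

Lemma dl (c x : R) : is_derive x 1 (fun s : R => c * s) c.
Proof.
have H := @is_deriveZ R R R id c x 1 1 (is_derive_id x 1).
exact: (is_derive_eq H (mulr1 c)).
Qed.

Lemma dcos (c r t : R) : derive1 (fun s => cos (c*s) * r) t = - sin (c*t) * c * r.
Proof.
have d1 : derivable (fun s : R => c * s) t 1 := @ex_derive _ _ _ _ _ _ _ (dl c t).
have d2 : derivable cos (c * t) 1 := @ex_derive _ _ _ _ _ _ _ (is_derive_cos _).
have dc : derivable (fun s => cos (c*s)) t 1.
  apply/derivable1_diffP.
  apply: (@differentiable_comp _ _ _ _ (fun s : R => c * s) cos).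
  exact/derivable1_diffP.
  exact/derivable1_diffP.
rewrite (derive1Mr (f := fun s => cos (c*s))) //.
rewrite -[fun s => cos (c * s)]/(cos \o (fun s : R => c * s)).
rewrite (derive1_comp d1 d2).
rewrite !derive1E !derive_val.
congr (_ * _ * _); exact: mulr1.
Qed.

Lemma dsin (c r t : R) : derive1 (fun s => sin (c*s) * r) t = cos (c*t) * c * r.
Proof.
have d1 : derivable (fun s : R => c * s) t 1 := @ex_derive _ _ _ _ _ _ _ (dl c t).
have d2 : derivable sin (c * t) 1 := @ex_derive _ _ _ _ _ _ _ (is_derive_sin _).
have dc : derivable (fun s => sin (c*s)) t 1.
  apply/derivable1_diffP.
  apply: (@differentiable_comp _ _ _ _ (fun s : R => c * s) sin).
  exact/derivable1_diffP.
  exact/derivable1_diffP.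
rewrite (derive1Mr (f := fun s => sin (c*s))) //.
rewrite -[fun s => sin (c * s)]/(sin \o (fun s : R => c * s)).
rewrite (derive1_comp d1 d2).
rewrite !derive1E !derive_val.
congr (_ * _ * _); exact: mulr1.
Qed.

Lemma mulCC (a b c d : R) : Complex a b * Complex c d = Complex (a*c - b*d) (a*d + b*c) :> R[i].
Proof. by []. Qed.
Lemma addCC (a b c d : R) : Complex a b + Complex c d = Complex (a+c) (b+d) :> R[i].
Proof. by []. Qed.
Lemma oneC : 1 = Complex 1 0 :> R[i].
Proof. by []. Qed.
Lemma invCr (r : R) : (Complex r 0)^-1 = Complex r^-1 0 :> R[i].
Proof.
have -> : (Complex r 0)^-1 = Complex (r / (r^+2 + 0^+2)) (- (0 / (r^+2 + 0^+2))) :> R[i] by [].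
congr Complex; last by rewrite mul0r oppr0.
rewrite expr0n /= addr0.
have [->|r0] := eqVneq r 0; first by rewrite mul0r invr0.
by rewrite expr2 invfM mulrA mulfV ?mul1r.
Qed.
Definition E (a q : R) : R[i] := Complex (cos a * q) (sin a * q).
Lemma EMul a q b p : E a q * E b p = E (a + b) (q * p).
Proof. rewrite /E mulCC cosD sinD; congr Complex; ring. Qed.
Lemma E01 : E 0 1 = 1.
Proof. by rewrite /E cos0 sin0 mul0r mul1r. Qed.
Lemma prodE_seq (I : Type) (l : seq I) (a : I -> R) q :
  \prod_(i <- l) E (a i) q = E (\sum_(i <- l) a i) (q ^+ size l).
Proof.
elim: l => [|x l IH]; first by rewrite !big_nil expr0 E01.
by rewrite !big_cons IH EMul exprS.
Qed.
Lemma prodE (I : finType) (a : I -> R) q :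
  \prod_(i : I) E (a i) q = E (\sum_(i : I) a i) (q ^+ #|I|).
Proof. by rewrite prodE_seq cardT enumT [index_enum _]unlock. Qed.
Lemma sqmodE a q : sqmod (E a q) = q ^+ 2.
Proof.
have h := cos2Dsin2 a; rewrite /sqmod /E /=.
transitivity ((cos a ^+ 2 + sin a ^+ 2) * q ^+ 2); first by ring.
by rewrite h mul1r.
Qed.
Lemma divE a q r : E a q / Complex r 0 = E a (q / r).
Proof. rewrite invCr /E mulCC; congr Complex; ring. Qed.
Definition q0 : R := (Num.sqrt 2)^-1.
Lemma q0sq : q0 ^+ 2 = 2^-1.
Proof. by rewrite /q0 exprVn sqr_sqrtr // ler0n. Qed.
Lemma q0n0 : q0 != 0.
Proof. by rewrite /q0 invr_eq0 sqrtr_eq0 -ltNge ltr0n. Qed.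
Lemma ekE t b : e_ket t b = E (b%:R * t) q0.
Proof.
rewrite /e_ket invCr /E /q0; case: b => /=.
  by rewrite /expi mulCC mul1r; congr Complex; ring.
rewrite oneC mulCC !mul0r cos0 sin0; congr Complex; ring.
Qed.
Lemma sumC (I : finType) (f g : I -> R) :
  \sum_(i : I) Complex (f i) (g i) = Complex (\sum_i f i) (\sum_i g i) :> R[i].
Proof.
apply: (big_rec3 (fun a b c => a = Complex b c)) => // i a b c _ ->.
by rewrite addCC.
Qed.

Lemma QFI_gen (I : finType) (c : I -> R) (r t : R) :
  QFI (fun s i => Complex (cos (c i * s) * r) (sin (c i * s) * r)) t
  = 4 * (\sum_i c i ^+ 2 * r ^+ 2 - (\sum_i c i * r ^+ 2) ^+ 2).
Proof.
have hd i : dstate (fun s i => Complex (cos (c i * s) * r) (sin (c i * s) * r)) t i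
   = Complex (- sin (c i * t) * c i * r) (cos (c i * t) * c i * r).
  by rewrite /dstate /= dcos dsin.
rewrite /QFI; congr (_ * (_ - _)).
  apply: eq_bigr => i _; rewrite hd /sqmod /=.
  have h := cos2Dsin2 (c i * t).
  transitivity ((cos (c i * t) ^+ 2 + sin (c i * t) ^+ 2) * (c i ^+ 2 * r ^+ 2)); first by ring.
  by rewrite h mul1r.
rewrite (eq_bigr (fun i => Complex 0 (c i * r ^+ 2))); last first.
  move=> i _; rewrite hd /= mulCC.
  have h := cos2Dsin2 (c i * t).
  congr Complex; first by ring.
  transitivity ((cos (c i * t) ^+ 2 + sin (c i * t) ^+ 2) * (c i * r ^+ 2)); first by ring.
  by rewrite h mul1r.
by rewrite sumC /sqmod /= big1 // expr0n /= add0r.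
Qed.

Lemma abg_inv n (f : Defs.basis n -> Defs.basis n) (psi : Defs.basis n -> R[i]) y :
  involutive f -> apply_basis_gate f psi y = psi (f y).
Proof.
move=> fK; rewrite /apply_basis_gate; apply: big_pred1 => x /=.
by apply/eqP/eqP => [<-|->]; rewrite fK.
Qed.
Lemma cnotK n (c t : 'I_n.+1) : c != t -> involutive (cnot c t).
Proof.
move=> ct x; apply/ffunP => j; rewrite /cnot !ffunE.
case: eqP => [->|_] //.
by rewrite (negbTE ct) eqxx addKb.
Qed.
Definition stepc n (j : 'I_n) (z : Defs.basis n) : Defs.basis n := cnot ord0 (lift ord0 j) z.
Definition Fc n (y : Defs.basis n) : Defs.basis n := foldr (@stepc n) y (enum 'I_n).
Arguments Fc {n}.
Lemma after_cnotsE n (psi : Defs.basis n -> R[i]) y :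
  after_cnots psi y = psi (Fc y).
Proof.
rewrite /after_cnots /Fc; elim: (enum 'I_n) psi => [|j l IH] psi //=.
by rewrite IH abg_inv //; apply: cnotK; exact: neq_lift.
Qed.
Lemma cnotE n (c t : 'I_n.+1) x j : cnot c t x j = if j == t then x c (+) x t else x j.
Proof. by rewrite /cnot ffunE. Qed.
Lemma fold0 n (l : seq 'I_n) (y : Defs.basis n) :
  (foldr (@stepc n) y l) ord0 = y ord0.
Proof.
elim: l => //= j l IH.
rewrite /stepc cnotE; case: eqP => [h|_]; last exact: IH.
by move: (neq_lift ord0 j); rewrite -h eqxx.
Qed.
Lemma stepcE n (j : 'I_n) (z : Defs.basis n) (k : 'I_n.+1) : stepc n j z k = if k == lift ord0 j then z ord0 (+) z (lift ord0 j) else z k.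
Proof. by rewrite /stepc cnotE. Qed.
Lemma foldL n (l : seq 'I_n) (y : Defs.basis n) (i : 'I_n) :
  (foldr (@stepc n) y l) (lift ord0 i)
  = y (lift ord0 i) (+) (odd (count_mem i l) && y ord0).
Proof.
elim: l => [|j l IH] /=; first by rewrite addbF.
rewrite stepcE (inj_eq (@lift_inj _ ord0)).
have [<-|ij] := eqVneq i j.
  rewrite fold0 IH /=.
  by case: (odd (count_mem i l)); case: (y ord0); case: (y (lift ord0 i)).
by rewrite IH.
Qed.
Lemma Fc0 n (y : Defs.basis n) : Fc y ord0 = y ord0.
Proof. exact: fold0. Qed.
Lemma FcL n (y : Defs.basis n) (i : 'I_n) : Fc y (lift ord0 i) = y (lift ord0 i) (+) y ord0.
Proof.
rewrite /Fc foldL (count_uniq_mem _ (enum_uniq _)) mem_enum /=.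
by case: (y ord0); case: (y _).
Qed.
Lemma joinE0 n a (m : {ffun 'I_n -> bool}) : join a m ord0 = a.
Proof. rewrite /join. rewrite ffunE. by rewrite unlift_none. Qed.
Lemma joinEL n a (m : {ffun 'I_n -> bool}) (i : 'I_n) : join a m (lift ord0 i) = m i.
Proof. by rewrite /join ffunE liftK. Qed.

Definition Phi n (th : 'I_n.+1 -> R) (a : bool) (m : {ffun 'I_n -> bool}) : R :=
  a%:R * th ord0 + \sum_(i < n) (m i (+) a)%:R * th (lift ord0 i).
Arguments Phi {n}.
Lemma psiE n (th : 'I_n.+1 -> R) a m :
  after_cnots (prod_state th) (join a m) = E (Phi th a m) (q0 ^+ n.+1).
Proof.
rewrite after_cnotsE /prod_state.
under eq_bigr => j _ do rewrite ekE.
rewrite prodE card_ord big_ord_recl Fc0 joinE0 /Phi.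
congr E; congr (_ + _); apply: eq_bigr => i _.
by rewrite FcL joinEL joinE0.
Qed.
Lemma PhiT n (th : 'I_n.+1 -> R) m : Phi th true m = Phi th false m + theta_tot th m.
Proof.
rewrite /Phi /theta_tot.
have -> : \sum_(i < n) (m i (+) true)%:R * th (lift ord0 i) =
   \sum_(i < n) (m i (+) false)%:R * th (lift ord0 i) + \sum_(i < n) (-1) ^+ m i * th (lift ord0 i).
  by rewrite -big_split /=; apply: eq_bigr => i _; case: (m i) => /=; ring.
rewrite /=; ring.
Qed.
Lemma pow2inv n : (2^-1 : R) ^+ n.+1 + 2^-1 ^+ n.+1 = 1 / 2 ^+ n.
Proof. by rewrite exprS -mulrDl -div1r -splitr mul1r exprVn div1r. Qed.
Lemma Q2 n : (q0 ^+ n.+1) ^+ 2 = 2^-1 ^+ n.+1.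
Proof. by rewrite -exprM mulnC exprM q0sq. Qed.
Lemma prob_main n (th : 'I_n.+1 -> R) m :
  prob (after_cnots (prod_state th)) m = 1 / 2 ^+ n.
Proof. by rewrite /prob big_bool /= !psiE !sqmodE Q2 pow2inv. Qed.

Lemma bcan (x y b : bool) : (x == b) = (y == b) -> x = y.
Proof. by case: x; case: y; case: b. Qed.
Lemma bsel (c b : bool) : ((if c then b else ~~ b) == b) = c.
Proof. by case: c; case: b. Qed.
Lemma card_cnt N (b : bool) k :
  #|[set m : {ffun 'I_N -> bool} | #|[set i | m i == b]| == k]| = 'C(N, k).
Proof.
pose S (m : {ffun 'I_N -> bool}) : {set 'I_N} := [set i | m i == b].
have Sinj : injective S.
  move=> m1 m2 /setP h; apply/ffunP => i; move: (h i); rewrite !inE.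
  exact: bcan.
rewrite -[in RHS](card_ord N) -card_draws -(card_imset _ Sinj).
apply: eq_card => A; rewrite inE.
have SA : S [ffun i => if i \in A then b else ~~ b] = A.
  by apply/setP => i; rewrite inE ffunE bsel.
apply/imsetP/idP.
  by case=> m; rewrite inE => /eqP hm ->; rewrite /S hm.
move=> hA; exists [ffun i => if i \in A then b else ~~ b]; last by rewrite SA.
by rewrite inE; move: SA; rewrite /S => ->.
Qed.

Lemma sum_cnt N b (F : nat -> R) :
  \sum_(m : {ffun 'I_N -> bool}) F #|[set i | m i == b]| = \sum_(k < N.+1) 'C(N, k)%:R * F k.
Proof.
rewrite (partition_big (fun m : {ffun 'I_N -> bool} => inord #|[set i | m i == b]| : 'I_N.+1) predT) //=.
apply: eq_bigr => k _.
have hc (m : {ffun 'I_N -> bool}) : (#|[set i | m i == b]| < N.+1)%N.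
  by move: (max_card [set i | m i == b]); rewrite card_ord.
rewrite (eq_bigl (fun m => m \in [set m : {ffun 'I_N -> bool} | #|[set i | m i == b]| == k])); last first.
  by move=> m /=; rewrite inE -val_eqE /= inordK.
rewrite (eq_bigr (fun _ => F k)); last by move=> m; rewrite inE => /eqP ->.
by rewrite sumr_const card_cnt mulr_natl.
Qed.

Lemma pascal_nat n (f : nat -> R) :
  \sum_(0 <= k < n.+2) 'C(n.+1, k)%:R * f k = \sum_(0 <= k < n.+1) 'C(n, k)%:R * (f k + f k.+1).
Proof.
rewrite [LHS]big_nat_recl // bin0.
under eq_bigr do rewrite binS natrD mulrDl.
rewrite big_split /=.
under [RHS]eq_bigr do rewrite mulrDr.
rewrite [RHS]big_split /= [X in _ = X + _]big_nat_recl // bin0.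
rewrite [X in _ + (X + _) = _]big_nat_recr //= bin_small // mul0r addr0.
ring.
Qed.
Lemma pascal_sum n (f : nat -> R) :
  \sum_(k < n.+2) 'C(n.+1, k)%:R * f k = \sum_(k < n.+1) 'C(n, k)%:R * (f k + f k.+1).
Proof. by have := pascal_nat n f; rewrite !big_mkord. Qed.
Lemma natS (k : nat) : (k.+1)%:R = k%:R + 1 :> R.
Proof. by rewrite mulrSr. Qed.
Lemma mom n (a b c : R) :
  4 * \sum_(k < n.+1) 'C(n, k)%:R * (a + b * k%:R + c * k%:R ^+ 2)
  = 2 ^+ n * (4 * a + 2 * b * n%:R + c * n%:R * (n%:R + 1)).
Proof.
elim: n a b c => [|n IH] a b c.
  rewrite big_ord1 /= bin0; ring.
rewrite (pascal_sum n (fun k => a + b * k%:R + c * k%:R ^+ 2)).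
rewrite (eq_bigr (fun k : 'I_n.+1 => 'C(n, k)%:R * ((2 * a + b + c) + (2 * b + 2 * c) * k%:R + (2 * c) * k%:R ^+ 2))); last first.
  by move=> k _; rewrite /= natS; ring.
rewrite IH exprS natS; ring.
Qed.
Lemma sum1n n : \sum_(i < n) (1 : R) = n%:R.
Proof. by rewrite sumr_const card_ord. Qed.
Lemma cnt_true N (x : {ffun 'I_N -> bool}) : \sum_j ((x j)%:R : R) = (#|[set j | x j == true]|)%:R.
Proof.
rewrite -sum1_card.
rewrite natr_sum.
rewrite [RHS]big_mkcond /=; apply: eq_bigr => j _.
by rewrite inE eqb_id; case: (x j).
Qed.
Lemma cnt_zero n (m : {ffun 'I_n -> bool}) : \sum_i ((~~ m i)%:R : R) = (nzeros m)%:R.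
Proof.
rewrite /nzeros -sum1_card natr_sum [RHS]big_mkcond /=; apply: eq_bigr => j _.
by rewrite inE; case: (m j).
Qed.
Lemma nzerosE n (m : {ffun 'I_n -> bool}) : nzeros m = #|[set i | m i == false]|.
Proof. rewrite /nzeros. apply: eq_card => i. rewrite !inE. by rewrite eqbF_neg. Qed.
Lemma mom2 N : 4 * \sum_(k < N.+1) 'C(N, k)%:R * (k%:R ^+ 2 : R) = 2 ^+ N * (N%:R * (N%:R + 1)).
Proof.
have h := mom N 0 0 1.
rewrite (eq_bigr (fun k : 'I_N.+1 => 'C(N, k)%:R * (0 + 0 * k%:R + 1 * k%:R ^+ 2))); last by move=> k _; ring.
rewrite h; ring.
Qed.
Lemma mom1 N : 4 * \sum_(k < N.+1) 'C(N, k)%:R * (k%:R : R) = 2 ^+ N * (2 * N%:R).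
Proof.
have h := mom N 0 1 0.
rewrite (eq_bigr (fun k : 'I_N.+1 => 'C(N, k)%:R * (0 + 1 * k%:R + 0 * k%:R ^+ 2))); last by move=> k _; ring.
rewrite h; ring.
Qed.
Lemma phase_main n (th : 'I_n.+1 -> R) m :
  eq_up_to_phase (post (after_cnots (prod_state th)) m) (e_ket (theta_tot th m)).
Proof.
exists (E (Phi th false m) (q0 ^+ n.+1 / Num.sqrt (prob (after_cnots (prod_state th)) m) / q0)); split.
  rewrite sqmodE prob_main !expr_div_n Q2 sqr_sqrtr; last by rewrite divr_ge0 // exprn_ge0.
  rewrite q0sq exprS exprVn; field.
  by rewrite expf_neq0 // pnatr_eq0.
move=> a; rewrite /post psiE divE ekE EMul; congr E.
  by case: a => /=; rewrite ?PhiT; ring.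
by rewrite divfK // q0n0.
Qed.

Lemma main_R (n : nat) (hn : (1 <= n)%N)
    (th : 'I_n.+1 -> R) :
  let psi := after_cnots (prod_state th) in
  (forall m : {ffun 'I_n -> bool}, prob psi m = 1 / 2 ^+ n) /\
  (forall m : {ffun 'I_n -> bool},
      eq_up_to_phase (post psi m) (e_ket (theta_tot th m))) /\
  (forall t : R,
     let psit := after_cnots (prod_state (fun _ : 'I_n.+1 => t)) in
     let ck (k : nat) : R := (2 * k + 2)%:R - (n.+1)%:R in
     (forall (k : nat) (m : {ffun 'I_n -> bool}), nzeros m = k ->
        eq_up_to_phase (post psit m) (e_ket (ck k * t))) /\
     (forall k : nat,
        \sum_(m : {ffun 'I_n -> bool} | nzeros m == k) prob psit m
          = 'C(n, k)%:R / 2 ^+ n) /\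
     \sum_(k < n.+1) ('C(n, k)%:R / 2 ^+ n) * QFI (fun s => e_ket (ck k * s)) t
       = \sum_(k < n.+1) ('C(n, k)%:R / 2 ^+ n) * (ck k) ^+ 2 /\
     \sum_(k < n.+1) ('C(n, k)%:R / 2 ^+ n) * (ck k) ^+ 2 = (n.+1)%:R /\
     QFI (fun s => prod_state (fun _ : 'I_n.+1 => s)) t = (n.+1)%:R).
Proof.
move=> psi; split; first by move=> m; exact: prob_main.
split; first by move=> m; exact: phase_main.
move=> t psit ck.
have hth (m : {ffun 'I_n -> bool}) : theta_tot (fun _ => t) m = ck (nzeros m) * t.
  rewrite /theta_tot /ck -mulr_suml.
  have -> : \sum_(i < n) ((-1) ^+ m i : R) = \sum_(i < n) (2 * (~~ m i)%:R - 1).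
    by apply: eq_bigr => i _; case: (m i) => /=; ring.
  rewrite sumrB -mulr_sumr cnt_zero sum1n natrD natrM natS; ring.
split.
  by move=> k m hk; have := phase_main n (fun _ : 'I_n.+1 => t) m; rewrite hth hk.
split.
  move=> k; rewrite (eq_bigr (fun _ => 1 / 2 ^+ n)); last by move=> m _; exact: prob_main.
  rewrite (eq_bigl (fun m => m \in [set m : {ffun 'I_n -> bool} | #|[set i | m i == false]| == k])); last by move=> m; rewrite inE nzerosE.
  by rewrite sumr_const card_cnt [RHS]mulr_natl div1r.
split.
  apply: eq_bigr => k _; congr (_ * _).
  have -> : (fun s => e_ket (ck k * s)) = (fun s (b : bool) => Complex (cos ((b%:R * ck k) * s) * q0) (sin ((b%:R * ck k) * s) * q0)).
    by apply/funext => s; apply/funext => b; rewrite ekE /E mulrA.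
  by rewrite QFI_gen !big_bool /= q0sq; field.
split.
  rewrite /ck.
  have hn1 : (n.+1)%:R = n%:R + 1 :> R := natS n.
  rewrite (eq_bigr (fun k : 'I_n.+1 => (2 ^+ n)^-1 * ('C(n, k)%:R * ((1 - n%:R) ^+ 2 + 4 * (1 - n%:R) * k%:R + 4 * k%:R ^+ 2)))); last first.
    by move=> k _; rewrite natrD natrM hn1; ring.
  rewrite -mulr_sumr.
  have h := mom n ((1 - n%:R) ^+ 2) (4 * (1 - n%:R)) 4.
  have hS : \sum_(k < n.+1) 'C(n, k)%:R * ((1 - n%:R) ^+ 2 + 4 * (1 - n%:R) * k%:R + 4 * k%:R ^+ 2) = 2 ^+ n * (4 * (1 - n%:R) ^+ 2 + 2 * (4 * (1 - n%:R)) * n%:R + 4 * n%:R * (n%:R + 1)) / (4 : R).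
    have h4 : (4:R) != 0 by rewrite pnatr_eq0.
    apply: (mulfI h4).
    by rewrite h; field.
  rewrite hS hn1; field.
  by rewrite expf_neq0 // pnatr_eq0.
have -> : (fun s => prod_state (fun _ : 'I_n.+1 => s)) = (fun s (x : Defs.basis n) => Complex (cos (#|[set j | x j == true]|%:R * s) * q0 ^+ n.+1) (sin (#|[set j | x j == true]|%:R * s) * q0 ^+ n.+1)).
  apply/funext => s; apply/funext => x; rewrite /prod_state.
  under eq_bigr do rewrite ekE.
  by rewrite prodE card_ord -mulr_suml cnt_true.
rewrite QFI_gen Q2 -!mulr_suml.
rewrite (sum_cnt n.+1 true (fun k : nat => (k%:R ^+ 2 : R))) (sum_cnt n.+1 true (fun k : nat => (k%:R : R))) /=.
have h4 : (4:R) != 0 by rewrite pnatr_eq0.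
have h2 := mom2 n.+1.
have h1 := mom1 n.+1.
have e2 : \sum_(k < n.+2) 'C(n.+1, k)%:R * (k%:R ^+ 2 : R) = 2 ^+ n.+1 * (n.+1%:R * (n.+1%:R + 1)) / (4 : R).
  by apply: (mulfI h4); rewrite h2; field.
have e1 : \sum_(k < n.+2) 'C(n.+1, k)%:R * (k%:R : R) = 2 ^+ n.+1 * (2 * n.+1%:R) / (4 : R).
  by apply: (mulfI h4); rewrite h1; field.
rewrite e2 e1 exprVn; field.
by rewrite expf_neq0 // pnatr_eq0.
Qed.

End Lib.

(* N = n.+1 qubits, N >= 2 i.e. 1 <= n. *)
Theorem mainTheorem2 (R : realType) (n : nat) (hn : (1 <= n)%N)
    (th : 'I_n.+1 -> R) :
  let psi := after_cnots (prod_state th) in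
  (* outcomes m_2..m_N independent and uniform: joint law uniform *)
  (forall m : {ffun 'I_n -> bool}, prob psi m = 1 / 2 ^+ n) /\
  (* post-measurement state of qubit 1 is |e_{theta_tot}> up to global phase *)
  (forall m : {ffun 'I_n -> bool},
      eq_up_to_phase (post psi m) (e_ket (theta_tot th m))) /\
  (* the special case theta_1 = ... = theta_N = t *)
  (forall t : R,
     let psit := after_cnots (prod_state (fun _ : 'I_n.+1 => t)) in
     let ck (k : nat) : R := (2 * k + 2)%:R - (n.+1)%:R in
     (forall (k : nat) (m : {ffun 'I_n -> bool}), nzeros m = k ->
        eq_up_to_phase (post psit m) (e_ket (ck k * t))) /\
     (forall k : nat,
        \sum_(m : {ffun 'I_n -> bool} | nzeros m == k) prob psit m
          = 'C(n, k)%:R / 2 ^+ n) /\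
     \sum_(k < n.+1) ('C(n, k)%:R / 2 ^+ n) * QFI (fun s => e_ket (ck k * s)) t
       = \sum_(k < n.+1) ('C(n, k)%:R / 2 ^+ n) * (ck k) ^+ 2 /\
     \sum_(k < n.+1) ('C(n, k)%:R / 2 ^+ n) * (ck k) ^+ 2 = (n.+1)%:R /\
     QFI (fun s => prod_state (fun _ : 'I_n.+1 => s)) t = (n.+1)%:R).
Proof. exact: (@main_R R n hn th). Qed.
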